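(* Suppose UE $j$ decodes $x_{B1}$ first ($j\overset{(1)}{\to}x_{B1}$), while UE $i$ does not decode $x_{A1}$ first. Then the rate region $\mathcal{R}_{3}(\mathcal{P}_{3})\cup\mathcal{R}_{4}(\mathcal{P}_{4})$ is achievable, where $$\mathcal{R}_{3}(\mathcal{P}_{3})=\bigcup_{\mathbf{p}\in\mathcal{P}_{3}}\Big\{\mathbf{r}\in\mathbb{R}_+^4\;\Big|\; r_{i,s}\le C\Big(\tfrac{p_{i,s}}{\alpha_{i}}\Big)\ (s=1,2),\; r_{i,1}+r_{i,2}\le C\Big(\tfrac{p_{i,1}+p_{i,2}}{\alpha_{i}}\Big),\; r_{j,1}\le C\Big(\tfrac{p_{j,1}}{p_{i,2}+p_{j,2}+\alpha_{j}}\Big),\; r_{j,2}\le C\Big(\tfrac{p_{j,2}}{p_{i,2}+\alpha_{j}}\Big)\Big\},$$ $$\mathcal{R}_{4}(\mathcal{P}_{4})=\bigcup_{\mathbf{p}\in\mathcal{P}_{4}}\Big\{\mathbf{r}\in\mathbb{R}_+^4\;\Big|\; r_{i,1}\le C\Big(\tfrac{p_{i,1}}{p_{j,2}+\alpha_{i}}\Big),\; r_{i,2}\le C\Big(\tfrac{p_{i,2}}{p_{i,1}+p_{j,2}+\alpha_{i}}\Big),\; r_{j,1}\le C\Big(\tfrac{p_{j,1}}{p_{i,2}+p_{j,2}+\alpha_{j}}\Big),\; r_{j,2}\le C\Big(\tfrac{p_{j,2}}{\alpha_{j}}\Big)\Big\},$$ with $\mathcal{P}_{3}=\{\mathbf{p}\in\mathcal{P}\mid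 p_{i,1}<\alpha_{j}-\alpha_{i}\}$ and $\mathcal{P}_{4}=\mathcal{P}\setminus\mathcal{P}_{3}$. The region $\mathcal{R}_{3}(\mathcal{P}_{3})$ is achieved by the decoding orders $i\overset{(1)}{\to}x_{B2}\overset{(2)}{\to}(x_{A1},x_{A2})$ and $j\overset{(1)}{\to}x_{B1}\overset{(2)}{\to}x_{B2}$; the region $\mathcal{R}_{4}(\mathcal{P}_{4})$ is achieved by the decoding orders $i\overset{(1)}{\to}x_{A2}\overset{(2)}{\to}x_{A1}$ and $j\overset{(1)}{\to}x_{B1}\overset{(2)}{\to}x_{A2}\overset{(3)}{\to}x_{B2}$.
   Context: Two-user downlink with a single-antenna base station (BS) and user equipments UE $i$ and UE $j$. UE $i$ requests file $W_A$ and UE $j$ requests file $W_B$; each file $W_f$ is split into subfiles, and the BS transmits four independent unit-power Gaussian codewords $x_{A1},x_{A2}$ (intended for UE $i$) and $x_{B1},x_{B2}$ (intended for UE $j$) with transmit powers $p_{i,1},p_{i,2},p_{j,1},p_{j,2}\ge 0$, i.e. $x=\sqrt{p_{i,1}}x_{A1}+\sqrt{p_{i,2}}x_{A2}+\sqrt{p_{j,1}}x_{B1}+\sqrt{p_{j,2}}x_{B2}$. Power vector $\mathbf{p}=(p_{i,1},p_{i,2},p_{j,1},p_{j,2})$, feasible set $\mathcal{P}=\{\mathbf{p}\in\mathbb{R}_+^4\mid p_{i,1}+p_{i,2}+p_{j,1}+p_{j,2}\le P\}$ for a total power budget $P>0$. UE $k$ receives $y_k=h_kx+z_k$ with $z_k\sim\mathcal{CN}(0,\sigma_k^2)$;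 the effective noise variance is $\alpha_k=\sigma_k^2/|h_k|^2$, and it is assumed $0<\alpha_i<\alpha_j$. Because UE $j$ has cached the data carried by $x_{A1}$ and UE $i$ has cached the data carried by $x_{B1}$, these are removed by cache-enabled interference cancellation, so the effective received signals (after normalizing by $h_k$) are: at UE $i$, $\sqrt{p_{i,1}}x_{A1}+\sqrt{p_{i,2}}x_{A2}+\sqrt{p_{j,2}}x_{B2}$ plus Gaussian noise of variance $\alpha_i$; at UE $j$, $\sqrt{p_{i,2}}x_{A2}+\sqrt{p_{j,1}}x_{B1}+\sqrt{p_{j,2}}x_{B2}$ plus Gaussian noise of variance $\alpha_j$. $C(\Gamma)=\log_2(1+\Gamma)$. Rate vector $\mathbf{r}=(r_{i,1},r_{i,2},r_{j,1},r_{j,2})$, where $r_{i,s}$ is the rate of $x_{As}$ and $r_{j,s}$ the rate of $x_{Bs}$. Receivers perform successive interference cancellation (SIC): signals are decoded in steps, each decoded signal being subtracted before later steps and undecoded signals treated as Gaussian noise; several signals may be jointly decoded in one step (multiple-access decoding). A signal intended for the other user may be decoded and cancelled only if its rate is supported at that decoding step at the decoding user. Notation: $k\overset{(n)}{\to}x_f$ means $x_f$ is the $n$-th decoded signal at UE $k$; $k\overset{(n)}{\to}(x_f,x_{f'})$ means $x_f,x_{f'}$ are jointly decoded in the $n$-th step. A rate vector is achievable if there is a power vector in the indicated set and decoding orders under which all intended signals (and all cancelled interfering signals) are decoded reliably at those rates. *)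

(* Defs.v *)
From Stdlib Require Import Reals Lra List.
Import ListNotations.
Open Scope R_scope.

Definition Cap (g : R) : R := ln (1 + g) / ln 2.

Inductive sig := A1 | A2 | B1 | B2.

Definition sig_eqb (f g : sig) : bool :=
  match f, g with
  | A1, A1 | A2, A2 | B1, B1 | B2, B2 => true
  | _, _ => false
  end.

Definition memb (f : sig) (s : list sig) : bool := existsb (sig_eqb f) s.

Inductive ue := UEi | UEj.

Definition alpha (ai aj : R) (k : ue) : R :=
  match k with UEi => ai | UEj => aj end.

(** Signals present at UE k after cache-enabled interference cancellation. *)
Definition present (k : ue) : list sig :=
  match k with UEi => [A1; A2; B2] | UEj => [A2; B1; B2] end.

Definition intended (k : ue) : list sig :=
  match k with UEi => [A1; A2] | UEj => [B1; B2] end.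

(** Power vector p and rate vector r are indexed by the signals:
    p A1 = p_{i,1}, p A2 = p_{i,2}, p B1 = p_{j,1}, p B2 = p_{j,2},
    and likewise for r. *)
Definition sumf (x : sig -> R) (s : list sig) : R :=
  fold_right (fun f acc => x f + acc) 0 s.

Definition in_P (P : R) (p : sig -> R) : Prop :=
  0 <= p A1 /\ 0 <= p A2 /\ 0 <= p B1 /\ 0 <= p B2 /\
  p A1 + p A2 + p B1 + p B2 <= P.

Definition in_P3 (ai aj P : R) (p : sig -> R) : Prop :=
  in_P P p /\ p A1 < aj - ai.

Definition in_P4 (ai aj P : R) (p : sig -> R) : Prop :=
  in_P P p /\ ~ (p A1 < aj - ai).

(** A decoding order (SIC schedule) at a UE is a list of steps; each step is
    a nonempty list of signals decoded jointly (multiple-access decoding). *)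
Definition valid_order (k : ue) (o : list (list sig)) : Prop :=
  (forall St, In St o -> St <> []) /\
  (forall f, In f (concat o) -> In f (present k)) /\
  NoDup (concat o) /\
  (forall f, In f (intended k) -> In f (concat o)).

(** Reliability of the SIC decoding: at each step, with [undec] the signals
    not yet decoded before the step and [undec'] those still undecoded after
    it (treated as Gaussian noise), every nonempty subset T of the jointly
    decoded signals S satisfies the MAC constraint
    sum_{f in T} r_f <= C( sum_{f in T} p_f / (sum_{g in undec'} p_g + alpha_k) ). *)
Fixpoint sic_ok (ak : R) (p r : sig -> R) (undec : list sig)
    (o : list (list sig)) : Prop :=
  match o with
  | [] => True
  | St :: rest =>
      let undec' := filter (fun f => negb (memb f St)) undec in
      (forall T, incl T St -> NoDup T -> T <> [] ->
          sumf r T <= Cap (sumf p T / (sumf p undec' + ak))) /\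
      sic_ok ak p r undec' rest
  end.

Definition achieved_by (ai aj : R) (Pset : (sig -> R) -> Prop)
    (oi oj : list (list sig)) (r : sig -> R) : Prop :=
  exists p, Pset p /\
    valid_order UEi oi /\ valid_order UEj oj /\
    sic_ok (alpha ai aj UEi) p r (present UEi) oi /\
    sic_ok (alpha ai aj UEj) p r (present UEj) oj.

Definition case_prop2 (oi oj : list (list sig)) : Prop :=
  head oj = Some [B1] /\ ~ (exists St, head oi = Some St /\ In A1 St).

Definition rate_nonneg (r : sig -> R) : Prop :=
  0 <= r A1 /\ 0 <= r A2 /\ 0 <= r B1 /\ 0 <= r B2.

Definition in_R3 (ai aj P : R) (r : sig -> R) : Prop :=
  rate_nonneg r /\ exists p, in_P3 ai aj P p /\
    r A1 <= Cap (p A1 / ai) /\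
    r A2 <= Cap (p A2 / ai) /\
    r A1 + r A2 <= Cap ((p A1 + p A2) / ai) /\
    r B1 <= Cap (p B1 / (p A2 + p B2 + aj)) /\
    r B2 <= Cap (p B2 / (p A2 + aj)).

Definition in_R4 (ai aj P : R) (r : sig -> R) : Prop :=
  rate_nonneg r /\ exists p, in_P4 ai aj P p /\
    r A1 <= Cap (p A1 / (p B2 + ai)) /\
    r A2 <= Cap (p A2 / (p A1 + p B2 + ai)) /\
    r B1 <= Cap (p B1 / (p A2 + p B2 + aj)) /\
    r B2 <= Cap (p B2 / aj).

Definition order3_i : list (list sig) := [[B2]; [A1; A2]].
Definition order3_j : list (list sig) := [[B1]; [B2]].
Definition order4_i : list (list sig) := [[A2]; [A1]].
Definition order4_j : list (list sig) := [[B1]; [A2]; [B2]].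

(* Main.v *)
From Pilot Require Import Defs.
From Stdlib Require Import Reals Lra List.
Import ListNotations.
Import Pilot.Defs.
Open Scope R_scope.

Lemma Cap_mono a1 a2 d1 d2 : 0 <= a2 -> a2 <= a1 -> 0 < d1 -> d1 <= d2 ->
  Cap (a2 / d2) <= Cap (a1 / d1).
Proof.
  intros H1 H2 H3 H4. unfold Cap.
  assert (Hq : 0 <= a2 / d2) by (unfold Rdiv; apply Rmult_le_pos; [lra|left; apply Rinv_0_lt_compat; lra]).
  assert (Hq2 : a2 / d2 <= a1 / d1).
  { apply Rle_trans with (a2 / d1).
    - unfold Rdiv. apply Rmult_le_compat_l; [lra|]. apply Rinv_le_contravar; lra.
    - unfold Rdiv. apply Rmult_le_compat_r; [|lra]. left; apply Rinv_0_lt_compat; lra. }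
  assert (L2 : 0 < ln 2) by (pose proof ln_lt_2; lra).
  unfold Rdiv at 1 3. apply Rmult_le_compat_r; [left; apply Rinv_0_lt_compat; lra|].
  destruct (Req_dec (a2/d2) (a1/d1)) as [E|E].
  - rewrite E; lra.
  - left; apply ln_increasing; lra.
Qed.

Lemma sub1 (a : sig) T : incl T [a] -> NoDup T -> T <> [] -> T = [a].
Proof.
  intros Hi Hn Hne. destruct T as [|x [|y t]]; [congruence| |].
  - assert (In x [a]) by (apply Hi; simpl; auto). simpl in H. destruct H as [->|[]]; auto.
  - exfalso. assert (In x [a]) by (apply Hi; simpl; auto).
    assert (In y [a]) by (apply Hi; simpl; auto).
    simpl in H, H0. destruct H as [->|[]]; destruct H0 as [->|[]].
    inversion Hn; subst. apply H1; simpl; auto.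
Qed.

Lemma sub2 T : incl T [A1; A2] -> NoDup T -> T <> [] ->
  T = [A1] \/ T = [A2] \/ T = [A1; A2] \/ T = [A2; A1].
Proof.
  intros Hi Hn Hne.
  assert (Hx : forall z, In z T -> z = A1 \/ z = A2).
  { intros z Hz. apply Hi in Hz. simpl in Hz. intuition. }
  destruct T as [|x [|y [|z t]]]; [congruence| | |].
  - destruct (Hx x) as [->| ->]; simpl; auto.
  - destruct (Hx x) as [->| ->]; simpl; auto; destruct (Hx y) as [->| ->]; simpl; auto;
    inversion Hn; subst; exfalso; apply H1; simpl; auto.
  - exfalso. inversion Hn; subst. inversion H2; subst.
    destruct (Hx x) as [->| ->]; simpl; auto; destruct (Hx y) as [->| ->]; simpl; auto;
    destruct (Hx z) as [->| ->]; simpl; auto; first [solve [apply H1; simpl; auto] | solve [apply H3; simpl; auto]].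
Qed.

Ltac capt H := match type of H with _ <= ?c => apply Rle_trans with c; [lra | apply Cap_mono; simpl; lra] end.

Lemma part3 ai aj P r : 0 < ai -> ai < aj -> in_R3 ai aj P r ->
  achieved_by ai aj (in_P3 ai aj P) order3_i order3_j r.
Proof.
  intros Ha Hij [Hr [p [HP3 [h1 [h2 [h3 [h4 h5]]]]]]].
  destruct HP3 as [[q1 [q2 [q3 [q4 q5]]]] q6].
  exists p. split; [split; [repeat split; auto|auto]|].
  split; [|split; [|split]].
  - repeat split.
    + intros St HS; simpl in HS; intuition; subst; discriminate.
    + intros f Hf; simpl in *; intuition.
    + simpl. repeat constructor; simpl; intuition discriminate.
    + intros f Hf; simpl in *; intuition.
  - repeat split.
    + intros St HS; simpl in HS; intuition; subst; discriminate.
    + intros f Hf; simpl in *; intuition.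
    + simpl. repeat constructor; simpl; intuition discriminate.
    + intros f Hf; simpl in *; intuition.
  - unfold order3_i; simpl. split; [|split; [|exact I]].
    + intros T Hi Hn Hne. rewrite (sub1 _ _ Hi Hn Hne). simpl. capt h5.
    + intros T Hi Hn Hne. destruct (sub2 _ Hi Hn Hne) as [ -> | [ -> | [ -> | -> ] ] ]; simpl.
      * capt h1.
      * capt h2.
      * capt h3.
      * eapply Rle_trans; [|apply Cap_mono with (a2 := p A1 + p A2) (d2 := ai); simpl; lra].
        lra.
  - unfold order3_j; simpl. split; [|split; [|exact I]].
    + intros T Hi Hn Hne. rewrite (sub1 _ _ Hi Hn Hne). simpl. capt h4.
    + intros T Hi Hn Hne. rewrite (sub1 _ _ Hi Hn Hne). simpl. capt h5.
Qed.

Lemma part4 ai aj P r : 0 < ai -> ai < aj -> in_R4 ai aj P r ->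
  achieved_by ai aj (in_P4 ai aj P) order4_i order4_j r.
Proof.
  intros Ha Hij [Hr [p [HP4 [h1 [h2 [h3 h4]]]]]].
  destruct HP4 as [[q1 [q2 [q3 [q4 q5]]]] q6].
  assert (q7 : aj - ai <= p A1) by lra.
  exists p. split; [split; [repeat split; auto|auto]|].
  split; [|split; [|split]].
  - repeat split.
    + intros St HS; simpl in HS; intuition; subst; discriminate.
    + intros f Hf; simpl in *; intuition.
    + simpl. repeat constructor; simpl; intuition discriminate.
    + intros f Hf; simpl in *; intuition.
  - repeat split.
    + intros St HS; simpl in HS; intuition; subst; discriminate.
    + intros f Hf; simpl in *; intuition.
    + simpl. repeat constructor; simpl; intuition discriminate.
    + intros f Hf; simpl in *; intuition.
  - unfold order4_i; simpl. split; [|split; [|exact I]].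
    + intros T Hi Hn Hne. rewrite (sub1 _ _ Hi Hn Hne). simpl. capt h2.
    + intros T Hi Hn Hne. rewrite (sub1 _ _ Hi Hn Hne). simpl. capt h1.
  - unfold order4_j; simpl. split; [|split; [|split; [|exact I]]].
    + intros T Hi Hn Hne. rewrite (sub1 _ _ Hi Hn Hne). simpl. capt h3.
    + intros T Hi Hn Hne. rewrite (sub1 _ _ Hi Hn Hne). simpl. capt h2.
    + intros T Hi Hn Hne. rewrite (sub1 _ _ Hi Hn Hne). simpl. capt h4.
Qed.

Theorem proposition2 (ai aj P : R) (Hai : 0 < ai) (Hij : ai < aj) (HP : 0 < P)
    (r : sig -> R) :
  (in_R3 ai aj P r -> achieved_by ai aj (in_P3 ai aj P) order3_i order3_j r) /\
  (in_R4 ai aj P r -> achieved_by ai aj (in_P4 ai aj P) order4_i order4_j r) /\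
  (in_R3 ai aj P r \/ in_R4 ai aj P r ->
     exists oi oj, case_prop2 oi oj /\ achieved_by ai aj (in_P P) oi oj r).
Proof.
  split; [|split].
  - apply part3; auto.
  - apply part4; auto.
  - intros [H|H].
    + exists order3_i, order3_j. split.
      * split; [reflexivity|]. intros [St [E HA]]. simpl in E. inversion E; subst.
        simpl in HA; intuition discriminate.
      * destruct (part3 _ _ _ _ Hai Hij H) as [p [[Hp _] Rest]]. exists p; auto.
    + exists order4_i, order4_j. split.
      * split; [reflexivity|]. intros [St [E HA]]. simpl in E. inversion E; subst.
        simpl in HA; intuition discriminate.
      * destruct (part4 _ _ _ _ Hai Hij H) as [p [[Hp _] Rest]]. exists p; auto.
Qed.
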